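(* Let $R=k[x_1,\dots,x_m]$ be a polynomial ring over a field $k$, $\lambda:\mathbb Z^m\to\mathbb Z$ a linear map, and $I$ a homogeneous ideal of $R$. With the notation $\widetilde L$ defined in the context, for all $n\ge0$, $$\widetilde{I^n}=\widetilde I^{\,n}:\langle t\rangle=\bigcup_{r\ge0}(\widetilde I^{\,n}:t^r).$$
   Context: For a monomial $u=x^b$ set $\lambda(u)=\lambda(b)$. For $0\ne g=\sum a_iu_i\in R$ ($a_i\in k\setminus\{0\}$, $u_i$ distinct monomials) with $b(g)=\max\lambda(u_i)$, put $g^*=t^{b(g)}g(t^{-\lambda(x_1)}x_1,\dots,t^{-\lambda(x_m)}x_m)\in R[t]$, where $t$ is a new variable. For an ideal $L\subseteq R$ let $L^*\subseteq R[t]$ be the ideal generated by $\{g^*: g\in L\}$, let $S=k[t]_{(t)}[x_1,\dots,x_m]$, and set $\widetilde L=L^*S$. *)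

(* Defs.v *)
From HB Require Import structures.
From mathcomp Require Import all_boot all_order all_algebra.
From mathcomp Require Import fraction.
From mathcomp Require Import mpoly.
Set Implicit Arguments. Unset Strict Implicit. Unset Printing Implicit Defensive.
Import Order.TTheory GRing.Theory Num.Theory.
Local Open Scope ring_scope.

(* Subsets of a ring T are predicates T -> Prop.  [Rs] is the ambient subring
   (all of T for R itself, the subring S inside a fraction field otherwise). *)

Definition gen_ideal (T : comNzRingType) (Rs A : T -> Prop) : T -> Prop :=
  fun z => exists n (c a : 'I_n -> T),
    (forall i, Rs (c i)) /\ (forall i, A (a i)) /\ z = \sum_(i < n) c i * a i.

Definition pow_ideal (T : comNzRingType) (Rs J : T -> Prop) (n : nat) : T -> Prop :=
  gen_ideal Rs (fun z => exists a : 'I_n -> T,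
                   (forall i, J (a i)) /\ z = \prod_(i < n) a i).

Definition colon_pow (T : comNzRingType) (Rs J : T -> Prop) (x : T) (r : nat)
  : T -> Prop := fun z => Rs z /\ J (x ^+ r * z).

Definition saturation (T : comNzRingType) (Rs J : T -> Prop) (x : T) : T -> Prop :=
  fun z => exists r : nat, colon_pow Rs J x r z.

Definition is_ideal (T : comNzRingType) (I : T -> Prop) : Prop :=
  I 0 /\ (forall f g, I f -> I g -> I (f + g)) /\ (forall r f, I f -> I (r * f)).

Definition homog_comp (k : fieldType) (m : nat) (d : nat) (f : {mpoly k[m]})
  : {mpoly k[m]} :=
  \sum_(u <- msupp f | mdeg u == d) f@_u *: 'X_[u].

Definition homogeneous_ideal (k : fieldType) (m : nat) (I : {mpoly k[m]} -> Prop)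
  : Prop := is_ideal I /\ (forall f d, I f -> I (homog_comp d f)).

(* a linear map lambda : Z^m -> Z is given by its values w i = lambda(e_i) *)
Definition lam (m : nat) (w : 'I_m -> int) (u : 'X_{1..m}) : int :=
  \sum_(i < m) w i * (u i)%:Z.

Definition bdeg (k : fieldType) (m : nat) (w : 'I_m -> int) (g : {mpoly k[m]})
  : int :=
  \big[Num.max/lam w (head 0%MM (msupp g))]_(u <- msupp g) lam w u.

(* g^* = t^{b(g)} g(t^{-lambda(x_1)} x_1, ..., t^{-lambda(x_m)} x_m) in R[t],
   written out monomial by monomial: a u |-> a t^{b(g)-lambda(u)} u *)
Definition gstar (k : fieldType) (m : nat) (w : 'I_m -> int) (g : {mpoly k[m]})
  : {poly {mpoly k[m]}} :=
  \sum_(u <- msupp g) (g@_u *: 'X_[u])%:P * 'X^(absz (bdeg w g - lam w u)).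

Definition Frac (k : fieldType) (m : nat) := {fraction {poly {mpoly k[m]}}}.

Definition toF (k : fieldType) (m : nat) (f : {poly {mpoly k[m]}}) : Frac k m :=
  FracField.tofrac f.

Definition kt_in (k : fieldType) (m : nat) (s : {poly k}) : {poly {mpoly k[m]}} :=
  map_poly (fun c : k => c%:MP) s.

(* S = k[t]_(t)[x_1..x_m], realised as the subring of Frac(R[t]) of the
   fractions f / s with f in R[t] and s in k[t] \ (t) *)
Definition inS (k : fieldType) (m : nat) : Frac k m -> Prop :=
  fun z => exists (f : {poly {mpoly k[m]}}) (s : {poly k}),
    s.[0] != 0 /\ z = toF f / toF (kt_in m s).

Definition tS (k : fieldType) (m : nat) : Frac k m := toF (k:=k) (m:=m) 'X.

(* ~L = L^* S : the ideal of S generated by the g^*, g in L (g <> 0);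
   this equals the extension to S of the ideal L^* of R[t]. *)
Definition tilde (k : fieldType) (m : nat) (w : 'I_m -> int)
  (L : {mpoly k[m]} -> Prop) : Frac k m -> Prop :=
  gen_ideal (@inS k m) (fun z => exists g, L g /\ g != 0 /\ z = toF (gstar w g)).

Definition powR (k : fieldType) (m : nat) (I : {mpoly k[m]} -> Prop) (n : nat) :=
  pow_ideal (fun _ => True) I n.

(* Main.v *)
Require Import Defs.
From HB Require Import structures.
From mathcomp Require Import all_boot all_order all_algebra.
From mathcomp Require Import fraction.
From mathcomp Require Import mpoly.
From mathcomp Require Import zify.
Set Implicit Arguments. Unset Strict Implicit. Unset Printing Implicit Defensive.
Import Order.TTheory GRing.Theory Num.Theory.
Local Open Scope ring_scope.



Section Gen.
Variable T : comNzRingType.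
Variable Rs : T -> Prop.

Lemma gen_ind (A J : T -> Prop) :
  J 0 -> (forall x y, J x -> J y -> J (x + y)) ->
  (forall c x, Rs c -> A x -> J (c * x)) ->
  forall z, gen_ideal Rs A z -> J z.
Proof.
move=> J0 JD JM z [n [c [a [Hc [Ha ->]]]]].
by apply: (big_ind J) => // i _; apply: JM.
Qed.

Lemma gen0 A : gen_ideal Rs A 0.
Proof. by exists 0%N, (fun _ => 0), (fun _ => 0); rewrite big_ord0; do ![split] => // -[]. Qed.

Lemma gen_mem A x : Rs 1 -> A x -> gen_ideal Rs A x.
Proof.
move=> H1 Ax; exists 1%N, (fun _ => 1), (fun _ => x); rewrite big_ord1 mul1r.
by split.
Qed.

Lemma genD A x y : gen_ideal Rs A x -> gen_ideal Rs A y -> gen_ideal Rs A (x + y).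
Proof.
move=> [n1 [c1 [a1 [Hc1 [Ha1 ->]]]]] [n2 [c2 [a2 [Hc2 [Ha2 ->]]]]].
exists (n1 + n2)%N, (fun i => match split i with inl j => c1 j | inr j => c2 j end),
  (fun i => match split i with inl j => a1 j | inr j => a2 j end).
split; first by move=> i; case: split.
split; first by move=> i; case: split.
rewrite big_split_ord; congr (_ + _); apply: eq_bigr => i _.
  by rewrite -[lshift _ _]/(unsplit (inl i)) unsplitK.
by rewrite -[rshift _ _]/(unsplit (inr i)) unsplitK.
Qed.

Hypothesis RsM : forall x y, Rs x -> Rs y -> Rs (x * y).

Lemma genM A r x : Rs r -> gen_ideal Rs A x -> gen_ideal Rs A (r * x).
Proof.
move=> Hr [n [c [a [Hc [Ha ->]]]]].
exists n, (fun i => r * c i), a; split; first by move=> i; apply: RsM.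
split=> //; rewrite mulr_sumr; apply: eq_bigr => i _; exact: mulrA.
Qed.

Lemma gen_sub A (J : T -> Prop) :
  J 0 -> (forall x y, J x -> J y -> J (x + y)) ->
  (forall c x, Rs c -> J x -> J (c * x)) -> (forall x, A x -> J x) ->
  forall z, gen_ideal Rs A z -> J z.
Proof. move=> J0 JD JM JA; apply: gen_ind => // c x Hc Ax; apply: JM => //; exact: JA. Qed.

Lemma gen_mono A B : (forall x, A x -> B x) -> forall z, gen_ideal Rs A z -> gen_ideal Rs B z.
Proof.
move=> AB; apply: gen_ind; [exact: gen0|exact: genD|].
move=> c x Hc Ax; exists 1%N, (fun _ => c), (fun _ => x); rewrite big_ord1.
by split=> //; split=> // _; apply: AB.
Qed.

Hypothesis Rs1 : Rs 1.

Lemma gen_prod2 A B x y : gen_ideal Rs A x -> gen_ideal Rs B y ->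
  gen_ideal Rs (fun z => exists a b, A a /\ B b /\ z = a * b) (x * y).
Proof.
move=> gx; move: y; apply: gen_ind.
- by rewrite mulr0; apply: gen0.
- by move=> y1 y2 H1 H2; rewrite mulrDr; apply: genD.
move=> c b Hc Bb; rewrite mulrCA; apply: genM => //.
move: x gx; apply: gen_ind.
- by rewrite mul0r; apply: gen0.
- by move=> y1 y2 H1 H2; rewrite mulrDl; apply: genD.
move=> c' a Hc' Aa; rewrite -mulrA; apply: genM => //.
by apply: gen_mem => //; exists a, b.
Qed.

Lemma gen_prod A n (y : 'I_n -> T) : (forall i, gen_ideal Rs A (y i)) ->
  gen_ideal Rs (fun z => exists a : 'I_n -> T, (forall i, A (a i)) /\ z = \prod_(i < n) a i)
    (\prod_(i < n) y i).
Proof.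
elim: n y => [|n IH] y Hy.
  by rewrite big_ord0; apply: gen_mem => //; exists (fun _ => 0); rewrite big_ord0; split => // -[].
rewrite big_ord_recl.
have := gen_prod2 (Hy ord0) (IH _ (fun i => Hy (lift ord0 i))).
apply: gen_mono => z [a [b [Aa [[bb [Hbb ->]] ->]]]].
exists (fun i => if unlift ord0 i is Some j then bb j else a).
split; first by move=> i; case: unlift.
rewrite big_ord_recl unlift_none; congr (_ * _); apply: eq_bigr => i _.
by rewrite liftK.
Qed.
End Gen.



Section S.
Variables (k : fieldType) (m : nat).
Local Notation R := {mpoly k[m]}.
Local Notation P := {poly R}.
Local Notation F := (Frac k m).

Lemma ktM (s1 s2 : {poly k}) : kt_in m (s1 * s2) = kt_in m s1 * kt_in m s2.
Proof. by rewrite /kt_in rmorphM. Qed.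

Lemma kt1 : @kt_in k m 1 = 1.
Proof. by rewrite /kt_in rmorph1. Qed.

Lemma kt_neq0 (s : {poly k}) : s.[0] != 0 -> toF (kt_in m s) != 0.
Proof.
move=> hs; rewrite /toF tofrac_eq0 /kt_in map_poly_eq0.
by apply: contra hs => /eqP ->; rewrite horner0.
Qed.

Lemma toFM (p q : P) : toF (p * q) = toF p * toF q.
Proof. exact: rmorphM. Qed.
Lemma toFD (p q : P) : toF (p + q) = toF p + toF q.
Proof. exact: rmorphD. Qed.

Lemma inS_toF (p : P) : inS (toF p).
Proof. by exists p, 1; rewrite kt1 /toF rmorph1 divr1 hornerC oner_neq0. Qed.

Lemma inS1 : inS (1 : F).
Proof. by have := inS_toF 1; rewrite /toF rmorph1. Qed.

Lemma inS0 : inS (0 : F).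
Proof. by have := inS_toF 0; rewrite /toF rmorph0. Qed.

Lemma inSM (x y : F) : inS x -> inS y -> inS (x * y).
Proof.
move=> [f1 [s1 [h1 ->]]] [f2 [s2 [h2 ->]]].
exists (f1 * f2), (s1 * s2); rewrite hornerM mulf_neq0 //.
by rewrite ktM !toFM mulf_div.
Qed.

Lemma inSD (x y : F) : inS x -> inS y -> inS (x + y).
Proof.
move=> [f1 [s1 [h1 ->]]] [f2 [s2 [h2 ->]]].
exists (f1 * kt_in m s2 + f2 * kt_in m s1), (s1 * s2); rewrite hornerM mulf_neq0 //.
split=> //; rewrite ktM toFD !toFM.
by rewrite addf_div ?kt_neq0.
Qed.

Lemma inS_inv (s : {poly k}) : s.[0] != 0 -> inS (toF (kt_in m s))^-1.
Proof. by move=> hs; exists 1, s; rewrite /toF rmorph1 div1r. Qed.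

Lemma inSX (r : nat) : inS (tS k m ^+ r).
Proof. by rewrite /tS /toF -rmorphXn; apply: inS_toF. Qed.

Lemma Sspan (AP : P -> Prop) (z : F) :
  gen_ideal (@inS k m) (fun x => exists p, AP p /\ x = toF p) z ->
  exists p d, gen_ideal (fun _ => True) AP p /\ d.[0] != 0 /\
              z = toF p / toF (kt_in m d).
Proof.
move: z; apply: gen_ind.
- exists 0, 1; rewrite hornerC oner_neq0 /toF rmorph0 mul0r; split=> //.
  exact: gen0.
- move=> x y [p1 [d1 [g1 [h1 ->]]]] [p2 [d2 [g2 [h2 ->]]]].
  exists (p1 * kt_in m d2 + p2 * kt_in m d1), (d1 * d2).
  rewrite hornerM mulf_neq0 //; split; last split => //.
    by apply: genD; rewrite mulrC; apply: genM.
  by rewrite ktM toFD !toFM addf_div ?kt_neq0.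
- move=> c x [f [s [hs ->]]] [p [Ap ->]].
  exists (f * p), s; split; last split=> //.
    by apply: genM => //; apply: gen_mem.
  by rewrite toFM mulrAC.
Qed.

Lemma toF_gen (GP : P -> Prop) (p : P) :
  gen_ideal (fun _ => True) GP p ->
  gen_ideal (@inS k m) (fun x => exists q, GP q /\ x = toF q) (toF p).
Proof.
move: p; apply: gen_ind.
- by rewrite /toF rmorph0; apply: gen0.
- by move=> x y H1 H2; rewrite toFD; apply: genD.
move=> c x _ Gx; rewrite toFM; apply: genM; first exact: inSM.
  exact: inS_toF.
by apply: gen_mem; [exact: inS1| exists x].
Qed.

End S.



Section Q.
Variables (k : fieldType) (m : nat) (w : 'I_m -> int).
Local Notation R := {mpoly k[m]}.
Local Notation P := {poly R}.
Local Notation lm := (lam w).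

Lemma int_eqE (i : nat) (l e : int) :
  (i%:Z + l == e) = ((0 <= e - l) && (i == absz (e - l))).
Proof. by apply/eqP/andP => [H|[/eqP H1 /eqP H2]]; [split; apply/eqP|]; lia. Qed.

Lemma coef_sum_supp (c : 'X_{1..m} -> k) (p : R) v0 :
  (\sum_(v <- msupp p) (c v * p@_v) *: 'X_[v])@_v0 = c v0 * p@_v0.
Proof.
rewrite raddf_sum /=.
under eq_bigr do rewrite mcoeffZ mcoeffX.
case: (boolP (v0 \in msupp p)) => h.
  rewrite (bigD1_seq v0) ?msupp_uniq //= eqxx mulr1 big1 ?addr0 //.
  by move=> v /negbTE ->; rewrite mulr0.
rewrite (memN_msupp_eq0 h) mulr0 big1_seq // => v /andP[_ hv].
have /negbTE -> : v != v0 by apply: contraNneq h => <-.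
by rewrite mulr0.
Qed.

Definition Qc (e : int) (y : P) : R :=
  \sum_(i < size y) \sum_(v <- msupp y`_i)
     ((((i%:Z + lm v) == e)%:R * y`_i@_v) *: 'X_[v]).

Lemma QE0 e y v : (Qc e y)@_v = \sum_(i < size y) (((i%:Z + lm v) == e)%:R * y`_i@_v).
Proof.
rewrite /Qc raddf_sum; apply: eq_bigr => i _.
exact: (coef_sum_supp (fun v => ((i%:Z + lm v) == e)%:R)).
Qed.

Lemma QE e y v : (Qc e y)@_v =
  if (0 <= e - lm v) then (y`_(absz (e - lm v)))@_v else 0.
Proof.
rewrite QE0; case: ifP => h.
  set j := absz (e - lm v).
  case: (ltnP j (size y)) => hj.
    rewrite (bigD1 (Ordinal hj)) //= int_eqE h eqxx mul1r big1 ?addr0 //.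
    move=> i /eqP hi; rewrite int_eqE h /=.
    have /negbTE -> : (i : nat) != j by apply/eqP => hh; apply: hi; apply: val_inj.
    by rewrite mul0r.
  rewrite big1; last first.
    move=> i _; rewrite int_eqE h /=.
    have /negbTE -> : (i : nat) != j by apply/eqP => hh; have := ltn_ord i; lia.
    by rewrite mul0r.
  by rewrite nth_default // mcoeff0.
by rewrite big1 // => i _; rewrite int_eqE h /= mul0r.
Qed.

Lemma QD e y1 y2 : Qc e (y1 + y2) = Qc e y1 + Qc e y2.
Proof.
apply/mpolyP => v; rewrite mcoeffD !QE; case: ifP => _; last by rewrite addr0.
by rewrite coefD mcoeffD.
Qed.

Lemma Q0 e : Qc e 0 = 0.
Proof. by apply/mpolyP => v; rewrite QE coef0 mcoeff0; case: ifP. Qed.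

Lemma lamD m1 m2 : lm (m1 + m2)%MM = lm m1 + lm m2.
Proof.
rewrite /lam -big_split /=; apply: eq_bigr => i _.
by rewrite mnmDE PoszD mulrDr.
Qed.

Lemma mcoeffXM (u v : 'X_{1..m}) (f : R) :
  ('X_[u] * f)@_v = if (u <= v)%MM then f@_(v - u)%MM else 0.
Proof.
case: ifP => h.
  by rewrite mulrC; have := mcoeffMX f u (v - u)%MM; rewrite [(u + _)%MM]addmC submK.
apply: memN_msupp_eq0; rewrite mulrC (perm_mem (msuppMX f u)).
apply/mapP => -[u' _ hv]; move: h; rewrite hv.
by rewrite lem_addr.
Qed.

Lemma Q4 e (a : k) u (c : nat) y :
  Qc e (((a *: 'X_[u])%:P * 'X^c) * y) = (a *: 'X_[u]) * Qc (e - c%:Z - lm u) y.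
Proof.
apply/mpolyP => v.
rewrite QE -mulrA coefCM -!scalerAl !mcoeffZ !mcoeffXM coefXnM QE.
case: (boolP (u <= v)%MM) => huv; last first.
  by rewrite mulr0; case: ifP.
have lv : lm v = lm (v - u)%MM + lm u by rewrite -lamD submK.
case: (boolP (0 <= e - lm v)) => h1; case: (boolP (`|e - lm v| < c)%N) => h2;
  case: (boolP (0 <= e - c%:Z - lm u - lm (v - u)%MM)) => h3;
  rewrite ?mcoeff0 ?mulr0 //; try (exfalso; lia).
by do 3 f_equal; lia.
Qed.

Lemma QX e y : Qc e ('X * y) = Qc (e - 1) y.
Proof.
have -> : ('X : P) = (1 *: 'X_[0%MM])%:P * 'X^1.
  by rewrite scale1r mpolyX0 mul1r expr1.
by rewrite Q4 mpolyX0 scale1r mul1r /lam big1 ?subr0 // => i _; rewrite mnm0E mulr0.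
Qed.


Lemma bigmax_ge (s : seq 'X_{1..m}) (F : 'X_{1..m} -> int) x0 u :
  u \in s -> F u <= \big[Num.max/x0]_(v <- s) F v.
Proof.
elim: s => //= a s IH; rewrite inE big_cons le_max => /orP[/eqP->|/IH->].
  by rewrite lexx.
by rewrite orbT.
Qed.

Lemma bigmax_in (s : seq 'X_{1..m}) (F : 'X_{1..m} -> int) x0 :
  \big[Num.max/x0]_(v <- s) F v \in x0 :: map F s.
Proof.
elim: s => [|a s IH]; first by rewrite big_nil mem_head.
rewrite big_cons maxEle; case: ifP => _.
  move: IH; rewrite !inE => /orP[->|->] //; by rewrite !orbT.
by rewrite !inE eqxx orbT.
Qed.

Lemma bdeg_ge (q : R) u : u \in msupp q -> lm u <= bdeg w q.
Proof. exact: bigmax_ge. Qed.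

Lemma bdeg_in (q : R) : q != 0 -> exists2 u, u \in msupp q & bdeg w q = lm u.
Proof.
move=> q0; have := bigmax_in (msupp q) lm (lm (head 0%MM (msupp q))).
rewrite -/(bdeg w q) inE => /orP[/eqP->|/mapP[u hu ->]]; last by exists u.
exists (head 0%MM (msupp q)) => //.
move: q0; rewrite -msupp_eq0; case: (msupp q) => //= a s _; exact: mem_head.
Qed.

Lemma gstar_coef (q : R) j v :
  ((gstar w q)`_j)@_v = ((j == absz (bdeg w q - lm v))%:R) * q@_v.
Proof.
rewrite /gstar coef_sum.
rewrite (eq_bigr (fun u => (((j == absz (bdeg w q - lm u))%:R * q@_u) *: 'X_[u]))).
  exact: (coef_sum_supp (fun u => ((j == absz (bdeg w q - lm u))%:R))).
move=> u _; rewrite coefCM coefXn.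
by case: eqP => _; rewrite ?mulr1 ?mul1r ?mulr0 ?mul0r ?scale0r.
Qed.

Lemma Qgstar e (q : R) : Qc e (gstar w q) = (e == bdeg w q)%:R *: q.
Proof.
apply/mpolyP => v; rewrite QE gstar_coef mcoeffZ.
case: (boolP (v \in msupp q)) => hv; last first.
  by rewrite (memN_msupp_eq0 hv) !mulr0; case: ifP.
have hb := bdeg_ge hv.
case: ifP => h0.
  rewrite (_ : (absz (e - lm v) == absz (bdeg w q - lm v))%N = (e == bdeg w q)) //.
  case: (eqVneq e (bdeg w q)) => H; first by rewrite H !eqxx.
  by apply: negbTE; apply/eqP => H'; apply: (elimN eqP H); lia.
rewrite (_ : (e == bdeg w q) = false) ?mul0r //.
by apply/negbTE/eqP => H; move/negbT: h0; lia.
Qed.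

Lemma Qdecomp (y : P) : exists E : seq int,
  y = \sum_(e <- E) 'X^(absz (e - bdeg w (Qc e y))) * gstar w (Qc e y).
Proof.
exists (undup [seq (i%:Z + lm v) | i <- iota 0 (size y), v <- msupp y`_i]).
apply/polyP => i; apply/mpolyP => v.
rewrite coef_sum raddf_sum /=.
have term : forall e, (('X^(absz (e - bdeg w (Qc e y))) * gstar w (Qc e y))`_i)@_v
    = ((i%:Z + lm v == e)%:R * y`_i@_v).
  move=> e; set q := Qc e y; rewrite coefXnM.
  case: (boolP (v \in msupp q)) => hv; last first.
    rewrite (_ : (_ : R)@_v = 0); last first.
      by case: ifP => _; rewrite ?mcoeff0 // gstar_coef (memN_msupp_eq0 hv) mulr0.
    case: (boolP (i%:Z + lm v == e)) => hie; last by rewrite mul0r.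
    have := memN_msupp_eq0 hv; rewrite /q QE.
    have h0 : 0 <= e - lm v by move/eqP: hie; lia.
    rewrite h0 (_ : absz (e - lm v) = i) => [->|]; last by move/eqP: hie; lia.
    by rewrite mulr0.
  have hb := bdeg_ge hv.
  have qn0 : q != 0 by apply/eqP => q0; rewrite q0 msupp0 in hv.
  have he : bdeg w q <= e.
    have [u hu ->] := bdeg_in qn0.
    move: hu; rewrite mcoeff_msupp /q QE; case: ifP => [h _|]; first lia.
    by rewrite eqxx.
  have hv' := hv; rewrite mcoeff_msupp /q QE in hv'.
  case: ifP hv' => h0 hv'; last by rewrite eqxx in hv'.
  case: ifP => hi.
    rewrite mcoeff0 (_ : (i%:Z + lm v == e) = false) ?mul0r //.
    by apply/negbTE/eqP => H; lia.
  rewrite gstar_coef.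
  case: (boolP (i%:Z + lm v == e)) => hie.
    rewrite (_ : (i - absz (e - bdeg w q) == absz (bdeg w q - lm v))%N = true).
      rewrite /q QE h0 (_ : absz (e - lm v) = i) //.
      by move/eqP: hie; lia.
    by apply/eqP; move/eqP: hie; move/negbT: hi; lia.
  rewrite (_ : (i - absz (e - bdeg w q) == absz (bdeg w q - lm v))%N = false) ?mul0r //.
  apply/negbTE/eqP => H; apply: (elimN eqP hie); move/negbT: hi; lia.
under eq_bigr do rewrite term.
case: (eqVneq (y`_i@_v) 0) => hy.
  by rewrite hy big1 // => e _; rewrite mulr0.
have hin : i%:Z + lm v \in undup [seq (i%:Z + lm v) | i <- iota 0 (size y), v <- msupp y`_i].
  rewrite mem_undup; apply/allpairsPdep; exists i, v; split => //.
    rewrite mem_iota add0n; case: (ltnP i (size y)) => // hs.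
    by move: hy; rewrite nth_default // mcoeff0 eqxx.
  by rewrite mcoeff_msupp hy.
rewrite (bigD1_seq _ hin (undup_uniq _)) /= eqxx mul1r big1 ?addr0 //.
by move=> e; rewrite eq_sym => /negbTE ->; rewrite mul0r.
Qed.

End Q.



Section W.
Variables (k : fieldType) (m : nat) (w : 'I_m -> int).
Local Notation R := {mpoly k[m]}.
Local Notation P := {poly R}.
Variable L : R -> Prop.
Hypothesis L0 : L 0.
Hypothesis LD : forall x y, L x -> L y -> L (x + y).
Hypothesis LM : forall c x, L x -> L (c * x).

Definition W (y : P) := forall e, L (Qc w e y).

Lemma W0 : W 0.
Proof. by move=> e; rewrite Q0. Qed.

Lemma WD y1 y2 : W y1 -> W y2 -> W (y1 + y2).
Proof. by move=> h1 h2 e; rewrite QD; apply: LD. Qed.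

Lemma Wsum I (r : seq I) (F : I -> P) : (forall i, W (F i)) -> W (\sum_(i <- r) F i).
Proof. by move=> h; apply: (big_ind W) => //; [exact: W0|exact: WD]. Qed.

Lemma WM c y : W y -> W (c * y).
Proof.
move=> hy; rewrite -[c]coefK poly_def mulr_suml; apply: Wsum => i.
rewrite -mul_polyC {1}[c`_i]mpolyE rmorph_sum !mulr_suml; apply: Wsum => u.
by move=> e; rewrite Q4; apply: LM.
Qed.

Lemma Wgstar q : L q -> W (gstar w q).
Proof. by move=> hq e; rewrite Qgstar -mul_mpolyC; apply: LM. Qed.

Lemma Wsat y : W ('X * y) -> W y.
Proof. by move=> h e; have := h (e + 1); rewrite QX addrK. Qed.

Lemma WsatX r y : W ('X^r * y) -> W y.
Proof.
elim: r y => [|r IH] y; first by rewrite expr0 mul1r.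
by rewrite exprS -mulrA => /Wsat; apply: IH.
Qed.

Lemma gstar0 : gstar w (0 : R) = 0.
Proof. by rewrite /gstar msupp0 big_nil. Qed.

Lemma Wdec y : W y ->
  gen_ideal (fun _ => True) (fun p => exists q, L q /\ q != 0 /\ p = gstar w q) y.
Proof.
move=> hy; have [E ->] := Qdecomp w y.
apply: (big_ind (gen_ideal _ _)); [exact: gen0|exact: genD|] => e _.
case: (eqVneq (Qc w e y) 0) => hq.
  by rewrite hq gstar0 mulr0; apply: gen0.
apply: (genM (fun _ _ _ _ => I)) => //; apply: gen_mem => //.
by exists (Qc w e y).
Qed.

End W.



Section Phi.
Variables (k : fieldType) (m : nat) (w : 'I_m -> int).
Local Notation R := {mpoly k[m]}.
Local Notation P := {poly R}.
Local Notation F := (Frac k m).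
Local Notation t := (tS k m).

Definition fC := (@FracField.tofrac {poly R}) \o (@polyC R) \o (@mpolyC m k).
Definition hX (i : 'I_m) : F := toF ('X_i)%:P * t ^ (- w i).
Definition phi (g : R) : F := mmap fC hX g.

Lemma phiM g1 g2 : phi (g1 * g2) = phi g1 * phi g2.
Proof. exact: rmorphM. Qed.
Lemma phiD g1 g2 : phi (g1 + g2) = phi g1 + phi g2.
Proof. exact: rmorphD. Qed.
Lemma phi0 : phi 0 = 0.
Proof. exact: rmorph0. Qed.
Lemma phi_prod n (a : 'I_n -> R) : phi (\prod_(i < n) a i) = \prod_(i < n) phi (a i).
Proof. exact: rmorph_prod. Qed.

Lemma t_neq0 : t != 0.
Proof. by rewrite /tS /toF tofrac_eq0 polyX_eq0. Qed.

Lemma prod_expz I (r : seq I) (e : I -> int) :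
  \prod_(i <- r) t ^ (e i) = t ^ (\sum_(i <- r) e i).
Proof.
elim: r => [|a r IH]; first by rewrite !big_nil expr0z.
by rewrite !big_cons IH expfzDr // t_neq0.
Qed.

Lemma mmap1_hX u : mmap1 hX u = toF ('X_[u])%:P * t ^ (- lam w u).
Proof.
rewrite /mmap1 /hX.
under eq_bigr do rewrite exprMn.
rewrite big_split /=; congr (_ * _).
  rewrite mpolyXE_id /toF !rmorph_prod; apply: eq_bigr => i _.
  by rewrite !rmorphXn.
under eq_bigr do rewrite exprnP exprz_exp.
rewrite prod_expz /lam -sumrN; congr (_ ^ _); apply: eq_bigr => i _.
by rewrite mulNr.
Qed.

Lemma F1 g : toF (gstar w g) = t ^ (bdeg w g) * phi g.
Proof.
rewrite /gstar /toF rmorph_sum /phi /mmap mulr_sumr; apply: eq_big_seq => u hu.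
rewrite mmap1_hX rmorphM rmorphXn -mul_mpolyC polyCM rmorphM /=.
have hb := bdeg_ge w hu.
have -> : (FracField.tofrac 'X) ^+ absz (bdeg w g - lam w u) =
   t ^ (bdeg w g) * t ^ (- lam w u).
  rewrite -expfzDr ?t_neq0 // exprnP; congr (_ ^ _); lia.
rewrite /fC /=.
rewrite /toF [RHS]mulrCA -mulrA; congr (_ * _); exact: mulrCA.
Qed.

Lemma Fpos g (M : nat) : bdeg w g <= M%:Z ->
  t ^+ M * phi g = toF ('X^(absz (M%:Z - bdeg w g)) * gstar w g).
Proof.
move=> hM.
have -> : toF ('X^(absz (M%:Z - bdeg w g)) * gstar w g) =
  t ^+ (absz (M%:Z - bdeg w g)) * toF (gstar w g).
  by rewrite /toF /tS rmorphM rmorphXn.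
rewrite F1.
rewrite mulrA !exprnP -expfzDr ?t_neq0 //; congr (_ ^ _ * _); lia.
Qed.

End Phi.



Section Main.
Variables (k : fieldType) (m : nat) (w : 'I_m -> int).
Local Notation R := {mpoly k[m]}.
Local Notation P := {poly R}.
Local Notation F := (Frac k m).
Local Notation t := (tS k m).
Variable I : R -> Prop.

Let TrueM : forall x y : P, (fun _ => True) x -> (fun _ => True) y -> (fun _ => True) (x * y).
Proof. by []. Qed.
Let TrueMR : forall x y : R, (fun _ => True) x -> (fun _ => True) y -> (fun _ => True) (x * y).
Proof. by []. Qed.

Lemma tildeI_gstar a : I a -> tilde w I (toF (gstar w a)).
Proof.
move=> Ia; case: (eqVneq a 0) => [->|a0].
  by rewrite gstar0 /toF rmorph0; apply: gen0.
by apply: gen_mem; [exact: inS1| exists a].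
Qed.

Lemma toF_tpow (M : nat) : toF ('X^M : P) = t ^+ M.
Proof. by rewrite /toF /tS rmorphXn. Qed.

Lemma prod_phi n (a : 'I_n -> R) : exists N : nat, exists C : P,
  t ^+ N * \prod_(i < n) phi w (a i) = toF C * \prod_(i < n) toF (gstar w (a i)).
Proof.
elim: n a => [|n IH] a.
  by exists 0%N, 1; rewrite !big_ord0 /toF rmorph1.
have [N [C HC]] := IH (fun i => a (lift ord0 i)).
set M := absz (bdeg w (a ord0)).
exists (M + N)%N, ('X^(absz (M%:Z - bdeg w (a ord0))) * C).
rewrite !big_ord_recl exprD mulrACA HC Fpos; last by rewrite /M; lia.
by rewrite !toFM mulrACA.
Qed.

Lemma powR_phi n g : powR I n g -> exists N : nat,
  pow_ideal (@inS k m) (tilde w I) n (t ^+ N * phi w g).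
Proof.
move: g; apply: gen_ind.
- by exists 0%N; rewrite phi0 mulr0; apply: gen0.
- move=> x y [N1 H1] [N2 H2]; exists (N1 + N2)%N.
  have -> : t ^+ (N1 + N2) * phi w (x + y) =
    t ^+ N2 * (t ^+ N1 * phi w x) + t ^+ N1 * (t ^+ N2 * phi w y).
    rewrite phiD mulrDr exprD; congr (_ + _).
      by rewrite mulrA [t ^+ N2 * _]mulrC.
    by rewrite mulrA.
  apply: (@genD F).
    by apply: (genM (@inSM k m)); [exact: inSX|exact: H1].
  by apply: (genM (@inSM k m)); [exact: inSX|exact: H2].
move=> c x _ [a [Ia ->]].
have [N [C HC]] := prod_phi a.
set M := absz (bdeg w c).
exists (M + N)%N; rewrite phiM phi_prod exprD mulrACA HC Fpos; last by rewrite /M; lia.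
rewrite mulrA -toFM; apply: (genM (@inSM k m)); first exact: inS_toF.
apply: (@gen_mem F); first exact: inS1.
exists (fun i => toF (gstar w (a i))); split => //.
by move=> i; apply: tildeI_gstar.
Qed.

Lemma dir1 n z : tilde w (powR I n) z ->
  saturation (@inS k m) (pow_ideal (@inS k m) (tilde w I) n) t z.
Proof.
move: z; apply: gen_ind.
- by exists 0%N; split; [exact: inS0| rewrite mulr0; apply: gen0].
- move=> x y [r1 [Sx Hx]] [r2 [Sy Hy]]; exists (r1 + r2)%N; split; first exact: inSD.
  have -> : t ^+ (r1 + r2) * (x + y) =
    t ^+ r2 * (t ^+ r1 * x) + t ^+ r1 * (t ^+ r2 * y).
    rewrite mulrDr exprD; congr (_ + _).
      by rewrite mulrA [t ^+ r2 * _]mulrC.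
    by rewrite mulrA.
  apply: (@genD F).
    by apply: (genM (@inSM k m)); [exact: inSX|exact: Hx].
  by apply: (genM (@inSM k m)); [exact: inSX|exact: Hy].
move=> c x Sc [g [Lg [g0 ->]]].
have [N HN] := powR_phi Lg.
exists (N + absz (bdeg w g))%N; split; first by apply: inSM => //; apply: inS_toF.
rewrite mulrCA; apply: (genM (@inSM k m)); first exact: Sc.
have -> : t ^+ (N + absz (bdeg w g)) * toF (gstar w g) =
    t ^+ (absz (`|bdeg w g| + bdeg w g)) * (t ^+ N * phi w g).
  rewrite F1 !mulrA !exprnP -!expfzDr ?t_neq0 //; congr (_ ^ _ * _); lia.
by apply: (genM (@inSM k m)); [exact: inSX|exact: HN].
Qed.


Lemma toF_inj : injective (@toF k m).
Proof. by move=> x y /eqP; rewrite tofrac_eq => /eqP. Qed.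

Definition AP n (q : P) := exists a : 'I_n -> R, (forall i, I (a i)) /\ q = \prod_(i < n) gstar w (a i).

Lemma PI_sub n x : pow_ideal (@inS k m) (tilde w I) n x ->
  gen_ideal (@inS k m) (fun x => exists p, AP n p /\ x = toF p) x.
Proof.
rewrite /pow_ideal; apply: (@gen_sub F (@inS k m) _ (gen_ideal (@inS k m) _)).
- exact: gen0.
- by move=> ? ?; apply: genD.
- by move=> c y Sc Hy; apply: (genM (@inSM k m)).
move=> y [b [Hb ->]].
have := gen_prod (@inSM k m) (@inS1 k m) Hb.
apply: gen_mono => q [b' [Hb' ->]].
have [a Ha] := fin_all_exists Hb'.
exists (\prod_(i < n) gstar w (a i)); split.
  by exists a; split => // i; have [] := Ha i.
rewrite /toF rmorph_prod; apply: eq_bigr => i _.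
by have [_ [_ ->]] := Ha i.
Qed.

Lemma powR_ideal n :
  [/\ powR I n 0, (forall x y, powR I n x -> powR I n y -> powR I n (x + y)) &
      (forall c x, powR I n x -> powR I n (c * x))].
Proof.
split; first exact: gen0.
  by move=> x y; apply: genD.
by move=> c x; apply: (genM TrueMR).
Qed.

Lemma W_AP n q : AP n q -> W w (powR I n) q.
Proof.
have [L0 LD LM] := powR_ideal n.
move=> [a [Ia ->]].
set h := \prod_(i < n) a i.
have Lh : powR I n h.
  by apply: gen_mem => //; exists a.
set B := \sum_(i < n) bdeg w (a i).
have E1 : toF (\prod_(i < n) gstar w (a i)) = t ^ B * phi w h.
  rewrite /toF rmorph_prod /h phi_prod -prod_expz -big_split /=.
  by apply: eq_bigr => i _; rewrite -F1.
pose M := (absz (bdeg w h) + absz B)%N.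
pose M' := absz ((M%:Z + B - bdeg w h)%R).
have E2 : 'X^M * \prod_(i < n) gstar w (a i) = 'X^M' * gstar w h.
  apply: toF_inj; rewrite !toFM !toF_tpow E1 F1 !mulrA !exprnP -!expfzDr ?t_neq0 //.
  congr (_ ^ _ * _); rewrite /M' /M; lia.
apply: (WsatX (r := M)); rewrite E2.
apply: WM => //; apply: Wgstar => //.
Qed.

Lemma dir2 n z : saturation (@inS k m) (pow_ideal (@inS k m) (tilde w I) n) t z ->
  tilde w (powR I n) z.
Proof.
have [L0 LD LM] := powR_ideal n.
move=> [r [[f [s [hs zE]]] hPI]].
have [p [d [gp [hd E1]]]] := Sspan (PI_sub hPI).
have Heq : 'X^r * f * kt_in m d = p * kt_in m s.
  apply: toF_inj; apply/eqP.
  rewrite !toFM -(eqr_div _ _ (kt_neq0 m hs) (kt_neq0 m hd)) -E1 toF_tpow zE.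
  by rewrite mulrA.
have Wp : W w (powR I n) p.
  move: gp; apply: (@gen_sub {poly R} (fun _ => True) _ (W w (powR I n))).
  - exact: W0.
  - by move=> ? ?; apply: WD.
  - by move=> c y _ Hy; apply: WM.
  exact: W_AP.
have WY : W w (powR I n) (f * kt_in m d).
  apply: (WsatX (r := r)); rewrite mulrA Heq mulrC.
  by apply: WM.
have gY := Wdec WY.
have -> : z = (toF (kt_in m (s * d)))^-1 * toF (f * kt_in m d).
  by rewrite zE ktM !toFM invfM mulrACA mulVf ?kt_neq0 // mulr1 mulrC.
apply: (genM (@inSM k m)); first by apply: inS_inv; rewrite hornerM mulf_neq0.
have := toF_gen gY; apply: gen_mono => x [q [[g [Lg [g0 ->]]] ->]].
by exists g.
Qed.

End Main.

Theorem lemma3p7 (k : fieldType) (m : nat) (w : 'I_m -> int)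
  (I : {mpoly k[m]} -> Prop) :
  homogeneous_ideal I ->
  forall n : nat, forall z : Frac k m,
    tilde w (powR I n) z <->
    saturation (@inS k m) (pow_ideal (@inS k m) (tilde w I) n) (tS k m) z.
Proof.
move=> _ n z; split; [exact: dir1 | exact: dir2].
Qed.
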